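(* Let $\mathscr{C}$ be a graph category. Then $\mathscr{C}$ is group-theoretical if and only if there exists a set $S$ of bilabelled graphs such that for every $(K,\mathbf{a},\mathbf{b})\in S$ every vertex of $K$ occurs among the entries of $\mathbf{a}$ or $\mathbf{b}$, and $\mathscr{C}$ is the graph category generated by $S\cup\{\mathbf{P}_{\mathrm{gt}}\}$.
   Context: Graphs are finite, undirected, without multiple edges, loops allowed, considered up to isomorphism; $N_k$ is the edgeless graph on $k$ vertices. Bilabelled graph: $(K,\mathbf{a},\mathbf{b})$ with $K$ a graph, $\mathbf{a}\in V(K)^k$ (inputs), $\mathbf{b}\in V(K)^l$ (outputs), up to isomorphism of $K$ preserving the tuples. Operations: tensor product $(K,\mathbf{a},\mathbf{b})\otimes(H,\mathbf{c},\mathbf{d})=(K\sqcup H,\mathbf{a}\mathbf{c},\mathbf{b}\mathbf{d})$; composition (for $|\mathbf{b}|=|\mathbf{c}|$) $(H,\mathbf{c},\mathbf{d})\cdot(K,\mathbf{a},\mathbf{b})=(H\cdot K,\mathbf{a},\mathbf{d})$ where $H\cdot K$ is obtained from $K\sqcup H$ by identifying $b_i$ with $c_i$ for all $i$ (ignoring edge multiplicities); involution $(K,\mathbf{a},\mathbf{b})^*=(K,\mathbf{b},\mathbf{a})$. For a partition $\pi$ of $V(K)$, $K/\pi$ has the blocks as vertices with an edge between two (possibly equal) blocks iff $K$ has an edge between some of their elements, $q_\pi$ the quotient map, and $(K,\mathbf{a},\mathbf{b})/\pi:=(K/\pi,q_\pi(\mathbf{a}),q_\pi(\mathbf{b}))$.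 Let $\mathbf{0}=(N_0,\emptyset,\emptyset)$ and $\mathbf{M}^{k,l}=(M,(v,\dots,v),(v,\dots,v))$ for the one-vertex loopless graph $M$ with vertex $v$ ($k$ inputs, $l$ outputs). A graph category is a set of bilabelled graphs containing $\mathbf{M}^{1,1},\mathbf{M}^{0,2},\mathbf{0}$ and closed under tensor products, compositions and involution; it is group-theoretical if it is also closed under all quotients $\mathbf{K}\mapsto\mathbf{K}/\pi$. $\mathbf{P}_{\mathrm{gt}}$ denotes the bilabelled graph $(N_2,(x,y,y),(y,y,x))$, where $N_2$ has the two vertices $x,y$ and no edges. *)

(* Defs.v *)
From mathcomp Require Import all_boot.
Set Implicit Arguments. Unset Strict Implicit. Unset Printing Implicit Defensive.

(* A concrete bilabelled graph: vertex set 'I_bn, adjacency relation badj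
   (only its symmetrisation [sedge] matters: graphs are undirected, loops
   allowed, no multiple edges), input tuple bin, output tuple bout. *)
Record bgraph := BG {
  bn : nat;
  badj : rel 'I_bn;
  bin : seq 'I_bn;
  bout : seq 'I_bn }.

Definition sedge (G : bgraph) (u v : 'I_(bn G)) : bool := badj u v || badj v u.

Definition biso (G H : bgraph) : Prop :=
  exists f : 'I_(bn G) -> 'I_(bn H),
    [/\ bijective f,
        (forall u v, sedge u v = sedge (f u) (f v)),
        map f (bin G) = bin H & map f (bout G) = bout H].

(* Quotient of a graph on 'I_n along a surjection q : 'I_n -> 'I_m
   (= partition of the vertex set with quotient map q), with given labels. *)
Definition quot_rel n m (adj : rel 'I_n) (q : 'I_n -> 'I_m) : rel 'I_m :=
  fun i j => [exists u, exists v, [&& q u == i, q v == j & adj u v]].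

Definition mkquot n m (adj : rel 'I_n) (q : 'I_n -> 'I_m) (a b : seq 'I_n)
  : bgraph := @BG m (quot_rel adj q) (map q a) (map q b).

Definition surj n m (q : 'I_n -> 'I_m) : Prop := forall j, exists i, q i = j.

Definition bquot (G : bgraph) m (q : 'I_(bn G) -> 'I_m) : bgraph :=
  mkquot (@badj G) q (bin G) (bout G).

Definition sum_rel n1 n2 (r1 : rel 'I_n1) (r2 : rel 'I_n2) : rel 'I_(n1 + n2) :=
  fun u v => match split u, split v with
             | inl a, inl b => r1 a b
             | inr a, inr b => r2 a b
             | _, _ => false
             end.

Definition btensor (K H : bgraph) : bgraph :=
  @BG (bn K + bn H) (sum_rel (@badj K) (@badj H))
      (map (@lshift _ _) (bin K) ++ map (@rshift _ _) (bin H))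
      (map (@lshift _ _) (bout K) ++ map (@rshift _ _) (bout H)).

Definition binv (K : bgraph) : bgraph := @BG (bn K) (@badj K) (bout K) (bin K).

Definition glue_rel (K H : bgraph) : rel 'I_(bn K + bn H) :=
  fun u v =>
    let z := zip (map (@lshift _ (bn H)) (bout K)) (map (@rshift (bn K) _) (bin H)) in
    ((u, v) \in z) || ((v, u) \in z).

(* Composition H . K (for |b| = |c|): the quotient of K |_| H by the
   equivalence relation generated by b_i ~ c_i (q is its quotient map),
   with inputs a (of K) and outputs d (of H). *)
Definition is_glue_map (K H : bgraph) m (q : 'I_(bn K + bn H) -> 'I_m) : Prop :=
  surj q /\ (forall u v, (q u == q v) = connect (@glue_rel K H) u v).

Definition bcomp (K H : bgraph) m (q : 'I_(bn K + bn H) -> 'I_m) : bgraph :=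
  mkquot (sum_rel (@badj K) (@badj H)) q
         (map (@lshift _ _) (bin K)) (map (@rshift _ _) (bout H)).

Definition bM (k l : nat) : bgraph :=
  @BG 1 (fun _ _ => false) (nseq k ord0) (nseq l ord0).
Definition b0 : bgraph := @BG 0 (fun _ _ => false) [::] [::].
Definition Pgt : bgraph :=
  @BG 2 (fun _ _ => false) [:: ord0; ord_max; ord_max] [:: ord_max; ord_max; ord0].

(* A set of bilabelled graphs (up to isomorphism) = an isomorphism-closed
   predicate on concrete representatives. *)
Definition iso_closed (C : bgraph -> Prop) : Prop :=
  forall G H, biso G H -> C G -> C H.

Definition graph_category (C : bgraph -> Prop) : Prop :=
  iso_closed C /\
  C (bM 1 1) /\ C (bM 0 2) /\ C b0 /\
  (forall K H, C K -> C H -> C (btensor K H)) /\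
  (forall K H m (q : 'I_(bn K + bn H) -> 'I_m),
     C K -> C H -> size (bout K) = size (bin H) -> is_glue_map q ->
     C (bcomp q)) /\
  (forall K, C K -> C (binv K)).

Definition group_theoretical (C : bgraph -> Prop) : Prop :=
  graph_category C /\
  (forall G m (q : 'I_(bn G) -> 'I_m), surj q -> C G -> C (bquot q)).

Definition generated (S : bgraph -> Prop) (G : bgraph) : Prop :=
  forall C, graph_category C -> (forall K, S K -> C K) -> C G.

(* Main.v *)
Require Import Defs.
From mathcomp Require Import all_boot.
Set Implicit Arguments. Unset Strict Implicit. Unset Printing Implicit Defensive.

Lemma split_l m n (u : 'I_m) : split (lshift n u) = inl u.
Proof. exact: (unsplitK (inl u)). Qed.
Lemma split_r m n (u : 'I_n) : split (rshift m u) = inr u.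
Proof. exact: (unsplitK (inr u)). Qed.

Lemma sum_rel_ll n1 n2 (r1 : rel 'I_n1) (r2 : rel 'I_n2) u v :
  sum_rel r1 r2 (lshift _ u) (lshift _ v) = r1 u v.
Proof. by rewrite /sum_rel !split_l. Qed.

Lemma sum_rel_false n1 n2 (r1 : rel 'I_n1) (r2 : rel 'I_n2) :
  (forall u v, r1 u v = false) -> (forall u v, r2 u v = false) ->
  forall u v, sum_rel r1 r2 u v = false.
Proof.
move=> h1 h2 u v; rewrite /sum_rel.
by case: (split u) => a; case: (split v) => b.
Qed.

Lemma bg_eq (C : bgraph -> Prop) n (r r' : rel 'I_n) a a' b b' :
  iso_closed C -> C (BG r a b) -> (forall i j, r i j = r' i j) -> a = a' -> b = b' ->
  C (BG r' a' b').
Proof.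
move=> ic H hr <- <-; apply: ic H; exists id; split => //=.
- by exists id.
- by move=> u v; rewrite /sedge /= !hr.
- by rewrite map_id.
- by rewrite map_id.
Qed.

Lemma zip_map2 (S T S' T' : Type) (f : S -> S') (g : T -> T') s t :
  zip (map f s) (map g t) = map (fun p => (f p.1, g p.2)) (zip s t).
Proof. by elim: s t => [|x s IH] [|y t] //=; rewrite IH. Qed.

Lemma zip_mapeq (S T : eqType) (R : Type) (f : S -> R) (g : T -> R) s t a b :
  map f s = map g t -> (a, b) \in zip s t -> f a = g b.
Proof.
elim: s t => [|x s IH] [|y t] //= [e1 e2]; rewrite in_cons => /orP [/eqP [-> ->] //|].
exact: IH.
Qed.

Lemma zip_ex (S T : eqType) (s : seq S) (t : seq T) b :
  size s = size t -> b \in t -> exists a, (a, b) \in zip s t.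
Proof.
elim: s t => [|x s IH] [|y t] //= [e]; rewrite in_cons => /orP [/eqP ->|].
  by exists x; rewrite mem_head.
by case/(IH _ e) => a h; exists a; rewrite in_cons h orbT.
Qed.

Lemma quot_rel_ext n m (r : rel 'I_n) (q : 'I_n -> 'I_m) n2 (r2 : rel 'I_n2)
   (phi : 'I_(n + n2) -> 'I_m) :
  (forall u, phi (lshift _ u) = q u) -> (forall u v, r2 u v = false) ->
  forall i j, quot_rel (sum_rel r r2) phi i j = quot_rel r q i j.
Proof.
move=> hl h2 i j; apply/existsP/existsP.
- case=> x /existsP [y /and3P [hx hy hr]].
  move: hx hy hr; rewrite -[x]splitK -[y]splitK /sum_rel !unsplitK.
  case: (split x) => [u|u]; case: (split y) => [v|v] //=; last by rewrite h2.
  rewrite !hl => hx hy hr; exists u; apply/existsP; exists v; exact/and3P.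
- case=> u /existsP [v /and3P [hx hy hr]]; exists (lshift _ u); apply/existsP.
  by exists (lshift _ v); rewrite sum_rel_ll !hl hx hy hr.
Qed.

Lemma glue_sym K H : symmetric (@glue_rel K H).
Proof. by move=> x y; rewrite /glue_rel orbC. Qed.

Lemma glue_lr K H u h : (u, h) \in zip (bout K) (bin H) ->
  @glue_rel K H (lshift _ u) (rshift _ h).
Proof.
move=> hz; rewrite /glue_rel zip_map2; apply/orP; left.
by apply/mapP; exists (u, h).
Qed.

Definition edgeless (G : bgraph) := forall u v, @badj G u v = false.

Lemma CM (C : bgraph -> Prop) (gc : graph_category C) K X m
  (psi : 'I_(bn K) -> 'I_m) (g : 'I_(bn X) -> 'I_m) :
  C K -> C X -> edgeless X -> (forall h, h \in bin X) ->
  surj psi -> map g (bin X) = map psi (bout K) ->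
  (forall u u', psi u = psi u' -> connect (@glue_rel K X) (lshift _ u) (lshift _ u')) ->
  C (@BG m (quot_rel (@badj K) psi) (map psi (bin K)) (map g (bout X))).
Proof.
case: gc => [ic [_ [_ [_ [_ [gcomp _]]]]]] CK CX eX allX spsi hmap hker.
pose phi (x : 'I_(bn K + bn X)) := match split x with inl u => psi u | inr h => g h end.
have phil u : phi (lshift _ u) = psi u by rewrite /phi split_l.
have phir h : phi (rshift _ h) = g h by rewrite /phi split_r.
have hsz : size (bout K) = size (bin X) by rewrite -(size_map psi) -hmap size_map.
have csym : connect_sym (@glue_rel K X) by apply: sym_connect_sym; apply: glue_sym.
have hh h : exists u, psi u = g h /\ connect (@glue_rel K X) (rshift _ h) (lshift _ u).
  have [u hu] := zip_ex hsz (allX h).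
  exists u; split; first exact: zip_mapeq (esym hmap) hu.
  by apply: connect1; rewrite glue_sym; apply: glue_lr.
have gm : is_glue_map phi.
  split.
    move=> j; case: (spsi j) => u <-; exists (lshift _ u); exact: phil.
  move=> x y; apply/idP/idP.
  - rewrite -[x]splitK -[y]splitK /phi !unsplitK.
    case: (split x) => [u|h]; case: (split y) => [u'|h'] /eqP e.
    + exact: hker.
    + case: (hh h') => v [ev cv]; rewrite csym; apply: connect_trans cv _.
      by apply: hker; rewrite ev e.
    + case: (hh h) => v [ev cv]; apply: connect_trans cv _.
      by apply: hker; rewrite ev e.
    + case: (hh h) => v [ev cv]; case: (hh h') => v' [ev' cv'].
      apply: connect_trans cv _; rewrite csym; apply: connect_trans cv' _.
      by apply: hker; rewrite ev ev' e.
  - case/connectP=> p; elim: p x => [|z p IH] x /=; first by move=> _ ->.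
    case/andP=> hxz hp hy; rewrite -(eqP (IH _ hp hy)); apply/eqP.
    have key a b : (a, b) \in zip (map (@lshift _ (bn X)) (bout K)) (map (@rshift (bn K) _) (bin X)) ->
        phi a = phi b.
      rewrite zip_map2 => /mapP [[u h] hu [-> ->]] /=.
      by rewrite phil phir; apply: zip_mapeq (esym hmap) hu.
    by case/orP: hxz => /key ->.
have := gcomp K X m phi CK CX hsz gm.
rewrite /bcomp /mkquot => H; apply: (bg_eq ic H).
- by move=> i j; apply: quot_rel_ext.
- by rewrite -map_comp; apply: eq_map.
- by rewrite -map_comp; apply: eq_map.
Qed.

Definition Eg n (c d : seq 'I_n) := @BG n (fun _ _ => false) c d.
Definition Idg p := Eg (enum 'I_p) (enum 'I_p).

Lemma mapmap (A B D : Type) (f : B -> D) (h : A -> B) s :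
  map f (map h s) = map (fun x => f (h x)) s.
Proof. by rewrite -map_comp. Qed.

Lemma quot_id n (r : rel 'I_n) i j : quot_rel r id i j = r i j.
Proof.
apply/existsP/idP.
- by case=> u /existsP [v /and3P [/eqP <- /eqP <-]].
- by move=> h; exists i; apply/existsP; exists j; rewrite !eqxx h.
Qed.

Lemma enum_add p : enum 'I_(p + 1) = map (@lshift p 1) (enum 'I_p) ++ map (@rshift p 1) (nseq 1 ord0).
Proof.
apply: (inj_map val_inj); rewrite map_cat.
have -> : map val (map (@lshift p 1) (enum 'I_p)) = map val (enum 'I_p).
  by elim: (enum 'I_p) => //= x s ->.
by rewrite !val_enum_ord /= addn0 iotaD.
Qed.

Lemma enum0 : enum 'I_0 = [::].
Proof. by apply/nilP; rewrite /nilp size_enum_ord. Qed.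

Lemma Id_in C (gc : graph_category C) p : C (Idg p).
Proof.
case: gc => [ic [M11 [_ [B0 [tens _]]]]].
elim: p => [|p IH].
  by apply: (bg_eq ic B0) => //; rewrite enum0.
rewrite -addn1; have := tens _ _ IH M11; rewrite /btensor /= => H.
apply: (bg_eq ic H) => //.
- by move=> i j; apply: sum_rel_false.
- by rewrite enum_add.
- by rewrite enum_add.
Qed.

Lemma LM C (gc : graph_category C) K Z (gz : 'I_(bn Z) -> 'I_(bn K)) b1 b3 :
  C K -> C Z -> edgeless Z -> (forall h, h \in bin Z) ->
  bout K = b1 ++ map gz (bin Z) ++ b3 ->
  C (BG (@badj K) (bin K) (b1 ++ map gz (bout Z) ++ b3)).
Proof.
move=> CK CZ eZ allZ hK.
have gc2 := gc; case: gc2 => [ic [_ [_ [_ [tens _]]]]].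
pose X := btensor (btensor (Idg (size b1)) Z) (Idg (size b3)).
pose g (x : 'I_(bn X)) : 'I_(bn K) :=
  match split x with
  | inl y => match split y with inl i => tnth (in_tuple b1) i | inr z => gz z end
  | inr i => tnth (in_tuple b3) i end.
have g1 i : g (lshift _ (lshift _ i)) = tnth (in_tuple b1) i by rewrite /g !split_l.
have g2 z : g (lshift _ (rshift _ z)) = gz z by rewrite /g split_l split_r.
have g3 i : g (rshift _ i) = tnth (in_tuple b3) i by rewrite /g split_r.
have CX : C X by apply: (tens); [apply: (tens) => //|]; apply: Id_in.
have eX : edgeless X.
  by move=> u v; apply: sum_rel_false => //; apply: sum_rel_false.
have allX h : h \in bin X.
  rewrite /X /btensor /= -[h]splitK; case: (split h) => [y|i] /=.
    rewrite mem_cat; apply/orP; left; apply: map_f.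
    rewrite -[y]splitK; case: (split y) => [i|z] /=; rewrite mem_cat.
      by apply/orP; left; apply: map_f; rewrite mem_enum.
    by apply/orP; right; apply: map_f.
  by rewrite mem_cat; apply/orP; right; apply: map_f; rewrite mem_enum.
have mb1 : map g (map (@lshift _ (size b3)) (map (@lshift _ (bn Z)) (enum 'I_(size b1)))) = b1.
  transitivity (map (tnth (in_tuple b1)) (enum 'I_(size b1))); last exact: map_tnth_enum.
  rewrite -(eq_map g1).
  by elim: (enum _) => //= x s ->.
have mb3 : map g (map (@rshift (size b1 + bn Z) _) (enum 'I_(size b3))) = b3.
  transitivity (map (tnth (in_tuple b3)) (enum 'I_(size b3))); last exact: map_tnth_enum.
  rewrite -(eq_map g3).
  by elim: (enum _) => //= x s ->.
have mb2 : map g (map (@lshift _ (size b3)) (map (@rshift (size b1) _) (bin Z))) = map gz (bin Z).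
  rewrite -(eq_map g2).
  by elim: (bin Z) => //= x s ->.
have mb2' : map g (map (@lshift _ (size b3)) (map (@rshift (size b1) _) (bout Z))) = map gz (bout Z).
  rewrite -(eq_map g2).
  by elim: (bout Z) => //= x s ->.
have hm : map g (bin X) = map id (bout K).
  by rewrite map_id hK /X /btensor /= !map_cat mb1 mb2 mb3 -catA.
have := CM gc CK CX eX allX (fun j => ex_intro _ j erefl) hm.
move/(_ (fun u u' e => eq_ind _ (fun w => connect _ _ (lshift _ w)) (connect0 _ _) _ e)).
move=> H; apply: (bg_eq ic H).
- by move=> i j; apply: quot_id.
- by rewrite map_id.
- by rewrite /X /btensor /= !map_cat mb1 mb2' mb3 -catA.
Qed.

Lemma quot_false n m (r : rel 'I_n) (q : 'I_n -> 'I_m) :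
  (forall u v, r u v = false) -> forall i j, quot_rel r q i j = false.
Proof.
move=> h i j; apply/existsP => -[u /existsP [w /and3P [_ _]]]; by rewrite h.
Qed.

Lemma bM_edgeless k l : edgeless (bM k l). Proof. by []. Qed.

Section WithPgt.
Variable C : bgraph -> Prop.
Hypothesis gc : graph_category C.
Hypothesis CP : C Pgt.

Let ic : iso_closed C. Proof. by case: gc. Qed.
Let M11 : C (bM 1 1). Proof. by case: gc => _ []. Qed.
Let M02 : C (bM 0 2). Proof. by case: gc => _ [_ []]. Qed.
Let tens : forall K H, C K -> C H -> C (btensor K H).
Proof. by case: gc => _ [_ [_ [_ []]]]. Qed.
Let inv : forall K, C K -> C (binv K).
Proof. by case: gc => _ [_ [_ [_ [_ []]]]]. Qed.

Lemma M13 : C (bM 1 3).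
Proof.
pose K := btensor (bM 0 2) (bM 1 1).
have CK : C K by apply: tens.
have hall : forall h, h \in bin Pgt.
  by case=> [[|[|m]] hm].
have hs : surj (fun _ : 'I_(bn K) => (ord0 : 'I_1)) by move=> j; exists ord0; rewrite ord1.
have hker : forall u u' : 'I_(bn K), (ord0 : 'I_1) = ord0 ->
    connect (@glue_rel K Pgt) (lshift _ u) (lshift _ u').
  move=> u u' _.
  have csym : connect_sym (@glue_rel K Pgt) by apply: sym_connect_sym; apply: glue_sym.
  pose z0 : 'I_(bn K) := lshift 1 ord0.
  pose t0 : 'I_(bn K) := rshift 1 ord0.
  have hz : connect (@glue_rel K Pgt) (lshift _ z0) (rshift _ (ord_max : 'I_2)).
    by apply: connect1; apply: glue_lr.
  have ht : connect (@glue_rel K Pgt) (lshift _ t0) (rshift _ (ord_max : 'I_2)).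
    by apply: connect1; apply: glue_lr.
  have hu w : connect (@glue_rel K Pgt) (lshift _ w) (lshift _ z0).
    case: w => [[|[|m]] hm] //.
      by have -> : Ordinal hm = z0 by apply: val_inj.
    have -> : Ordinal hm = t0 by apply: val_inj.
    by apply: connect_trans ht _; rewrite csym.
  by apply: connect_trans (hu u) _; rewrite csym.
have := CM gc (g := fun _ => ord0) CK CP (fun _ _ => erefl) hall hs erefl hker.
move=> H; apply: (bg_eq ic H) => //.
by apply: quot_false => u v; apply: sum_rel_false.
Qed.

Lemma all_bM1 k l (h : 'I_(bn (bM k.+1 l))) : h \in bin (bM k.+1 l).
Proof. by rewrite ord1 /= inE eqxx. Qed.

Lemma M04 : C (bM 0 4).
Proof.
have := LM gc (K := bM 0 2) (Z := bM 1 3) (gz := fun _ => ord0) (b1 := [::]) (b3 := [:: ord0]) M02 M13 (@bM_edgeless 1 3)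
  (@all_bM1 0 3) erefl.
by move=> H; apply: (bg_eq ic H).
Qed.

Lemma M40 : C (bM 4 0). Proof. exact: (inv M04). Qed.

Lemma all_Pgtinv (h : 'I_(bn (binv Pgt))) : h \in bin (binv Pgt).
Proof. by case: h => [[|[|m]] hm]. Qed.

Lemma MV n (r : rel 'I_n) a v b3 : forall b1,
  C (BG r a (b1 ++ [:: v; v] ++ b3)) -> C (BG r a (b1 ++ b3 ++ [:: v; v])).
Proof.
elim: b3 => [|x b3 IH] b1 H; first by rewrite cats0 in H.
pose gz (z : 'I_2) : 'I_n := if z == ord0 then x else v.
have := LM gc (K := BG r a (b1 ++ [:: v; v] ++ x :: b3)) (Z := binv Pgt) (gz := gz) (b1 := b1) (b3 := b3) H (inv CP) (fun _ _ => erefl) all_Pgtinv erefl.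
move=> H2; have := IH (rcons b1 x); rewrite -!cats1 -!catA /=; apply.
exact: H2.
Qed.

Lemma in_split (T : eqType) (x : T) s : x \in s -> exists s1 s2, s = s1 ++ x :: s2.
Proof.
elim: s => [|y s IH] //; rewrite in_cons => /orP [/eqP ->|/IH [s1 [s2 ->]]].
  by exists [::], s.
by exists (y :: s1), s2.
Qed.

Definition ext_out (G : bgraph) (v : 'I_(bn G)) := BG (@badj G) (bin G) (bout G ++ [:: v; v]).
Definition ext_in (G : bgraph) (v : 'I_(bn G)) := BG (@badj G) (bin G ++ [:: v; v]) (bout G).

Lemma DL G v : C G -> v \in bout G -> C (@ext_out G v).
Proof.
move=> CG /in_split [b1 [b3 e]].
have := LM gc (K := G) (Z := bM 1 3) (gz := fun _ => v) (b1 := b1) (b3 := b3) CG M13 (@bM_edgeless 1 3)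
  (@all_bM1 0 3) e.
rewrite /ext_out e /= => H.
have := MV (b1 := rcons b1 v) (b3 := b3) (v := v).
rewrite -!cats1 -!catA /=; apply; exact: H.
Qed.


Lemma map_const (A B : Type) (y : B) (s : seq A) : map (fun _ => y) s = nseq (size s) y.
Proof. by elim: s => //= x s ->. Qed.

Lemma mem_zip_nseq (S T : eqType) (s : seq S) (y : T) x :
  x \in s -> (x, y) \in zip s (nseq (size s) y).
Proof.
elim: s => //= z s IH; rewrite !in_cons => /orP [/eqP ->|/IH ->]; first by rewrite eqxx.
by rewrite orbT.
Qed.

Lemma R1 G v : C (@ext_out G v) -> C (@ext_in G v).
Proof.
move=> H.
pose K := btensor (ext_out v) (Idg 2).
pose X := btensor (Idg (size (bout G))) (bM 4 0).
pose psi (x : 'I_(bn K)) : 'I_(bn G) := match split x with inl u => u | inr _ => v end.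
pose g (x : 'I_(bn X)) : 'I_(bn G) :=
  match split x with inl i => tnth (in_tuple (bout G)) i | inr _ => v end.
have psil u : psi (lshift _ u) = u by rewrite /psi split_l.
have psir u : psi (rshift _ u) = v by rewrite /psi split_r.
have gl u : g (lshift _ u) = tnth (in_tuple (bout G)) u by rewrite /g split_l.
have gr u : g (rshift _ u) = v by rewrite /g split_r.
have CK : C K by apply: tens => //; apply: Id_in.
have CX : C X by apply: tens; [apply: Id_in | apply: M40].
have eX : edgeless X by move=> a b; apply: sum_rel_false.
have allX h : h \in bin X.
  rewrite /X /btensor /= -[h]splitK; case: (split h) => [i|z] /=; rewrite mem_cat.
    by apply/orP; left; apply: map_f; rewrite mem_enum.
  by apply/orP; right; rewrite ord1 inE eqxx.
have hs : surj psi by move=> j; exists (lshift _ j); rewrite psil.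
have mpl s : map psi (map (@lshift _ 2) s) = s.
  by elim: s => //= x s ->; rewrite psil.
have mpr s : map psi (map (@rshift (bn G) 2) s) = nseq (size s) v.
  by elim: s => //= x s ->; rewrite psir.
have mgl : map g (map (@lshift _ 1) (enum 'I_(size (bout G)))) = bout G.
  transitivity (map (tnth (in_tuple (bout G))) (enum 'I_(size (bout G)))); last exact: map_tnth_enum.
  rewrite -(eq_map gl).
  by elim: (enum _) => //= x s ->.
have hm : map g (bin X) = map psi (bout K).
  rewrite /X /K /btensor /= !map_cat mgl mpl mpr size_enum_ord /= !gr.
  by rewrite !psil -catA.
have csym : connect_sym (@glue_rel K X) by apply: sym_connect_sym; apply: glue_sym.
pose y : 'I_(bn X) := rshift _ ord0.
have gv : @glue_rel K X (lshift _ (lshift _ v)) (rshift _ y) /\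
    forall t, @glue_rel K X (lshift _ (rshift _ t)) (rshift _ y).
  have hz x : x \in [:: lshift 2 v; lshift 2 v] ++ map (@rshift (bn G) 2) (enum 'I_2) ->
      @glue_rel K X (lshift _ x) (rshift _ y).
    move=> hx; apply: glue_lr.
    rewrite /K /X /btensor /= map_cat -catA zip_cat; last by rewrite !size_map -enumT size_enum_ord.
    rewrite mem_cat; apply/orP; right.
    have -> : [:: y; y; y; y] = nseq (size ([:: lshift 2 v; lshift 2 v] ++ map (@rshift (bn G) 2) (enum 'I_2))) y.
      by rewrite size_cat size_map size_enum_ord.
    exact: mem_zip_nseq.
  split; first by apply: hz; rewrite mem_head.
  by move=> t; apply: hz; rewrite mem_cat; apply/orP; right; apply: map_f; rewrite mem_enum.
have cx x : connect (@glue_rel K X) (lshift _ x) (lshift _ (lshift _ (psi x))).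
  rewrite -[x]splitK; case: (split x) => [u|t] /=.
    by rewrite psil connect0.
  rewrite psir; apply: connect_trans (connect1 (proj2 gv t)) _.
  by rewrite csym; apply: connect1; exact: (proj1 gv).
have hker u u' : psi u = psi u' -> connect (@glue_rel K X) (lshift _ u) (lshift _ u').
  move=> e; apply: connect_trans (cx u) _; rewrite e csym; exact: cx.
have := CM gc CK CX eX allX hs hm hker.
move=> H2; apply: (bg_eq ic H2).
- move=> i j; rewrite (@quot_rel_ext _ _ _ id) //; first exact: quot_id.
- by rewrite /K /btensor /= map_cat mpl mpr size_enum_ord.
- by rewrite /X /btensor /= map_cat mgl cats0.
Qed.

Lemma R2 G v : C (@ext_in G v) -> C (@ext_out G v).
Proof. move=> H; exact: (inv (@R1 (binv G) v (inv H))). Qed.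

End WithPgt.

Fixpoint dbl (T : Type) (s : seq T) : seq T :=
  if s is x :: s' then x :: x :: dbl s' else [::].

Lemma dbl_rcons (T : Type) (s : seq T) x : dbl (rcons s x) = dbl s ++ [:: x; x].
Proof. by elim: s => //= y s ->. Qed.

Lemma mem_dbl (T : eqType) (s : seq T) x : (x \in dbl s) = (x \in s).
Proof. by elim: s => //= y s IH; rewrite !in_cons IH orbA orbb. Qed.

Lemma map_dbl (A B : Type) (f : A -> B) s : map f (dbl s) = dbl (map f s).
Proof. by elim: s => //= y s ->. Qed.

Lemma mem_zip_dbl (S T : eqType) (F : S -> T) (s : seq S) u :
  u \in s -> (u, F u) \in zip (dbl s) (dbl (map F s)).
Proof.
elim: s => //= y s IH; rewrite in_cons => /orP [/eqP ->|/IH h].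
  by rewrite in_cons eqxx.
by rewrite !in_cons h !orbT.
Qed.

Lemma AD C (gt : group_theoretical C) G v : C G -> C (@ext_out G v).
Proof.
case: gt => gc hq CG.
have ic : iso_closed C by case: gc.
have M02 : C (bM 0 2) by case: gc => _ [_ []].
have tens : forall K H, C K -> C H -> C (btensor K H) by case: gc => _ [_ [_ [_ []]]].
pose T := btensor G (bM 0 2).
pose q (x : 'I_(bn T)) : 'I_(bn G) := match split x with inl u => u | inr _ => v end.
have ql u : q (lshift _ u) = u by rewrite /q split_l.
have qr u : q (rshift _ u) = v by rewrite /q split_r.
have sq : surj q by move=> j; exists (lshift _ j).
have mql s : map q (map (@lshift _ 1) s) = s by elim: s => //= x s ->; rewrite ql.
have := hq T _ q sq (tens _ _ CG M02).
rewrite /bquot /mkquot /T /btensor /= => H; apply: (bg_eq ic H).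
- by move=> i j; rewrite (@quot_rel_ext _ _ _ id) // quot_id.
- by rewrite cats0 mql.
- by rewrite map_cat mql /= qr.
Qed.

Lemma CPgt C : group_theoretical C -> C Pgt.
Proof.
case=> gc hq.
have ic : iso_closed C by case: gc.
have M02 : C (bM 0 2) by case: gc => _ [_ []].
have M11 : C (bM 1 1) by case: gc => _ [].
have tens : forall K H, C K -> C H -> C (btensor K H) by case: gc => _ [_ [_ [_ []]]].
have inv : forall K, C K -> C (binv K) by case: gc => _ [_ [_ [_ [_ []]]]].
pose T := btensor (btensor (bM 0 2) (bM 1 1)) (binv (bM 0 2)).
have CT : C T by apply: (tens); [apply: (tens)|apply: (inv)].
pose q (i : 'I_(bn T)) : 'I_2 := if val i == 1 then ord0 else ord_max.
have sq : surj q.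
  move=> j; case: j => [[|[|m]] hm] //.
    by exists (Ordinal (isT : 1 < 3)); apply: val_inj.
  by exists (Ordinal (isT : 0 < 3)); apply: val_inj.
have := hq T _ q sq CT.
rewrite /bquot /mkquot => H; apply: (bg_eq ic H) => //.
by apply: quot_false => u w; apply: sum_rel_false => // ? ?; apply: sum_rel_false.
Qed.

Lemma remove_dbl D (gc : graph_category D) n (r : rel 'I_n) a b s :
  D (BG r a (b ++ dbl s)) -> D (BG r a b).
Proof.
have ic : iso_closed D by case: gc.
have M02 : D (bM 0 2) by case: gc => _ [_ []].
have inv : forall K, D K -> D (binv K) by case: gc => _ [_ [_ [_ [_ []]]]].
elim/last_ind: s => [|s x IH]; first by rewrite cats0.
rewrite dbl_rcons => H; apply: IH.
have e : bout (BG r a (b ++ dbl s ++ [:: x; x])) = (b ++ dbl s) ++ map (fun _ => x) (bin (binv (bM 0 2))) ++ [::].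
  by rewrite /= -catA.
have := LM gc (K := BG r a (b ++ dbl s ++ [:: x; x])) (Z := binv (bM 0 2))
  (gz := fun _ => x) (b1 := b ++ dbl s) (b3 := [::]) H (inv _ M02) (@bM_edgeless 2 0)
  (fun h => @all_bM1 1 0 h) e.
by rewrite /= cats0.
Qed.

Lemma forward C (gc : graph_category C) (gt : group_theoretical C) :
  exists S : bgraph -> Prop,
     (forall K, S K -> forall v : 'I_(bn K), v \in bin K ++ bout K) /\
     (forall G, C G <-> generated (fun K => S K \/ K = Pgt) G).
Proof.
exists (fun K => C K /\ forall v : 'I_(bn K), v \in bin K ++ bout K).
split; first by move=> K [].
move=> G; split; last first.
  by move=> hG; apply: hG => // K [[]|->] //; apply: CPgt.
case: G => n r a b CG D gD hD.
have full s : C (BG r a (b ++ dbl s)).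
  elim/last_ind: s => [|s x IH]; first by rewrite cats0.
  by rewrite dbl_rcons catA; exact: (AD gt (G := BG r a (b ++ dbl s)) x IH).
apply: (remove_dbl gD (s := enum 'I_n)); apply: hD; left; split; first exact: full.
by move=> v; rewrite mem_cat; apply/orP; right; rewrite mem_cat mem_dbl mem_enum orbT.
Qed.

Lemma backward C (gc : graph_category C) S
  (hS : forall K, S K -> forall v : 'I_(bn K), v \in bin K ++ bout K)
  (hC : forall G, C G <-> generated (fun K => S K \/ K = Pgt) G) :
  group_theoretical C.
Proof.
split => //.
have CP : C Pgt by apply/hC => D _ hD; apply: hD; right.
have CS K : S K -> C K by move=> sK; apply/hC => D _ hD; apply: hD; left.
have gc' := gc.
case: gc' => [ic [M11 [M02 [B0 [tens [comp inv]]]]]].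
pose P G := C G /\ forall v : 'I_(bn G), C (@ext_out G v).
have gP : graph_category P.
  split; [|split; [|split; [|split; [|split; [|split]]]]].
  - move=> G H hiso [CG PG]; split; first exact: ic hiso CG.
    case: hiso => f [fb fs fi fo].
    move=> v; case: fb => f' fK f'K.
    apply: (ic (@ext_out G (f' v))); last exact: PG.
    exists f; split => //=.
      by exists f'.
    by rewrite map_cat fo /= f'K.
  - split => // v; have -> : v = ord0 by rewrite ord1.
    exact: (M13 gc CP).
  - split => // v; have -> : v = ord0 by rewrite ord1.
    exact: (M04 gc CP).
  - by split => //; case.
  - move=> K H [CK PK] [CH PH]; split; first exact: tens.
    move=> v; rewrite -[v]splitK; case: (split v) => [u|w].
      have H1 := tens _ _ (PK u) CH.
      rewrite /btensor /= map_cat -catA in H1.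
      have := MV gc CP H1; rewrite /ext_out /btensor /= -catA; exact.
    have H1 := tens _ _ CK (PH w).
    rewrite /btensor /= map_cat catA in H1; exact: H1.
  - move=> K H m q [CK PK] [CH PH] hs gq; split; first exact: comp.
    move=> v; case: (gq.1 v) => x <-; rewrite -[x]splitK; case: (split x) => [u|h].
      have CKu := R1 gc CP (PK u).
      have H1 := comp (ext_in u) H m q CKu CH hs gq.
      apply: (R2 gc CP); move: H1; rewrite /bcomp /mkquot /ext_in /= !map_cat /=; exact.
    have H1 := comp K (ext_out h) m q CK (PH h) hs gq.
    move: H1; rewrite /bcomp /mkquot /ext_out /= !map_cat /=; exact.
  - move=> K [CK PK]; split; first exact: inv.
    move=> v; exact: (inv _ (R1 gc CP (PK v))).
have SP K : S K \/ K = Pgt -> P K.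
  case=> [sK|->].
    split; first exact: CS.
    move=> v; have := hS K sK v; rewrite mem_cat => /orP [hin|hout].
      apply: (R2 gc CP); exact: (inv _ (DL gc CP (inv _ (CS K sK)) hin)).
    exact: (DL gc CP (CS K sK) hout).
  split => // v; apply: (DL gc CP CP).
  by case: v => [[|[|m]] hm].
have LA G v : C G -> C (@ext_out G v).
  by move=> CG; have [] := (hC G).1 CG P gP SP.
have LAin G v : C G -> C (@ext_in G v).
  by move=> CG; apply: (R1 gc CP); apply: LA.
have N1 : C (@Eg 1 [::] [::]).
  have e : bout (bM 0 2) = [::] ++ map (fun _ => ord0) (bin (binv (bM 0 2))) ++ [::] by [].
  have := LM gc (K := bM 0 2) (Z := binv (bM 0 2)) (gz := fun _ => ord0) M02 (inv _ M02)
    (@bM_edgeless 2 0) (fun h => @all_bM1 1 0 h) e.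
  by move=> H; apply: (bg_eq ic H).
have Nk k : C (@Eg k [::] [::]).
  elim: k => [|k IH]; first by apply: (bg_eq ic B0).
  rewrite -addn1; have := tens _ _ IH N1; rewrite /btensor /= => H.
  apply: (bg_eq ic H) => //.
  by move=> i j; apply: sum_rel_false.
move=> [n r a b] m q sq CG.
have full s : C (BG r a (b ++ dbl s)).
  elim/last_ind: s => [|s x IH]; first by rewrite cats0.
  by rewrite dbl_rcons catA; exact: (LA (BG r a (b ++ dbl s)) x IH).
have Y s : C (@Eg m (dbl s) [::]).
  elim/last_ind: s => [|s x IH]; first exact: Nk.
  by rewrite dbl_rcons; exact: (LAin (@Eg m (dbl s) [::]) x IH).
pose K := BG r a (b ++ dbl (enum 'I_n)).
pose X := btensor (Idg (size b)) (@Eg m (dbl (map q (enum 'I_n))) [::]).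
pose g (x : 'I_(bn X)) : 'I_m :=
  match split x with inl i => q (tnth (in_tuple b) i) | inr j => j end.
have gl i : g (lshift _ i) = q (tnth (in_tuple b) i) by rewrite /g split_l.
have gr j : g (rshift _ j) = j by rewrite /g split_r.
have CK : C K by exact: full.
have CX : C X by apply: tens; [apply: Id_in | apply: Y].
have eX : edgeless X by move=> u w; apply: sum_rel_false.
have allX h : h \in bin X.
  rewrite /X /btensor /= -[h]splitK; case: (split h) => [i|j] /=; rewrite mem_cat.
    by apply/orP; left; apply: map_f; rewrite mem_enum.
  apply/orP; right; apply: map_f; rewrite mem_dbl.
  by case: (sq j) => u <-; apply: map_f; rewrite mem_enum.
have mgl : map g (map (@lshift _ (bn (@Eg m (dbl (map q (enum 'I_n))) [::]))) (enum 'I_(size b))) = map q b.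
  transitivity (map q (map (tnth (in_tuple b)) (enum 'I_(size b)))); last by rewrite map_tnth_enum.
  by elim: (enum 'I_(size b)) => //= x s ->; rewrite gl.
have mgr s : map g (map (@rshift (size b) _) s) = s.
  by elim: s => //= x s ->; rewrite gr.
have hm : map g (bin X) = map q (bout K).
  by rewrite /X /K /btensor /= map_cat mgl mgr map_cat map_dbl.
have csym : connect_sym (@glue_rel K X) by apply: sym_connect_sym; apply: glue_sym.
have cu u : @glue_rel K X (lshift _ u) (rshift _ (rshift _ (q u))).
  apply: glue_lr; rewrite /K /X /btensor /= zip_cat; last by rewrite size_map size_enum_ord.
  rewrite mem_cat; apply/orP; right; rewrite map_dbl mapmap.
  by apply: (@mem_zip_dbl _ _ (fun u => rshift (size b) (q u))); rewrite mem_enum.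
have hker u u' : q u = q u' -> connect (@glue_rel K X) (lshift _ u) (lshift _ u').
  move=> e; apply: connect_trans (connect1 (cu u)) _.
  by rewrite csym e; apply: connect1.
have := CM gc CK CX eX allX sq hm hker.
rewrite /bquot /mkquot /= => H; apply: (bg_eq ic H) => //.
by rewrite /X /btensor /= cats0 mgl.
Qed.

Theorem proposition2p33 (C : bgraph -> Prop) :
  graph_category C ->
  (group_theoretical C <->
   exists S : bgraph -> Prop,
     (forall K, S K -> forall v : 'I_(bn K), v \in bin K ++ bout K) /\
     (forall G, C G <-> generated (fun K => S K \/ K = Pgt) G)).
Proof.
move=> gc; split; first exact: forward.
by case=> S [hS hC]; apply: (backward gc hS hC).
Qed.
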